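(* Let $\mathscr{G}$ be a semigroup with a left-invariant metric $d$. (1) Every idempotent of $\mathscr{G}$ (an element $e$ with $e^2=e$) is a left identity (i.e. $eg=g$ for all $g\in\mathscr{G}$). Consequently every right identity of $\mathscr{G}$ is a two-sided identity. (2) Suppose $\mathscr{G}$ has no right identity (equivalently, no two-sided identity). Then the following are equivalent: (a) there exist a monoid $(M,\cdot,e)$ with a left-invariant metric $d_M$ and an injective semigroup homomorphism $\iota:\mathscr{G}\to M$ that is an isometry ($d_M(\iota a,\iota b)=d(a,b)$) with $\iota(\mathscr{G})=M\setminus\{e\}$; (b) $d$ is strongly left-invariant. In particular, if $d$ is strongly left-invariant and $\mathscr{G}$ has no right identity, then $\mathscr{G}$ has no idempotents.
   Context: A metric $d$ on a semigroup $\mathscr{G}$ is left-invariant if $d(ca,cb)=d(a,b)$ for all $a,b,c\in\mathscr{G}$, and strongly left-invariant if moreover $d(a,ab)=d(b,b^2)$ for all $a,b\in\mathscr{G}$. A left-invariant metric monoid is a monoid with a left-invariant metric. *)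

(* Defs.v *)
From Stdlib Require Import Reals.
Open Scope R_scope.

Definition is_semigroup {G : Type} (mul : G -> G -> G) : Prop :=
  forall a b c, mul a (mul b c) = mul (mul a b) c.

Definition is_monoid {M : Type} (mul : M -> M -> M) (e : M) : Prop :=
  is_semigroup mul /\ (forall x, mul e x = x) /\ (forall x, mul x e = x).

Definition is_metric {X : Type} (d : X -> X -> R) : Prop :=
  (forall x y, 0 <= d x y) /\
  (forall x y, d x y = 0 <-> x = y) /\
  (forall x y, d x y = d y x) /\
  (forall x y z, d x z <= d x y + d y z).

Definition left_invariant {G : Type} (mul : G -> G -> G) (d : G -> G -> R) : Prop :=
  forall a b c, d (mul c a) (mul c b) = d a b.

Definition strongly_left_invariant {G : Type} (mul : G -> G -> G) (d : G -> G -> R) : Prop :=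
  left_invariant mul d /\ forall a b, d a (mul a b) = d b (mul b b).

Definition idempotent {G : Type} (mul : G -> G -> G) (e : G) : Prop := mul e e = e.
Definition left_identity {G : Type} (mul : G -> G -> G) (e : G) : Prop := forall g, mul e g = g.
Definition right_identity {G : Type} (mul : G -> G -> G) (e : G) : Prop := forall g, mul g e = g.
Definition two_sided_identity {G : Type} (mul : G -> G -> G) (e : G) : Prop :=
  left_identity mul e /\ right_identity mul e.

(* Main.v *)
Require Import Defs.
From Stdlib Require Import Reals Lra.
Open Scope R_scope.

Theorem theorem5p1 (G : Type) (mul : G -> G -> G) (d : G -> G -> R)
  (Hsg : is_semigroup mul) (Hmet : is_metric d) (Hli : left_invariant mul d) :
  (* (1) *)
  (forall e : G, idempotent mul e -> left_identity mul e) /\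
  (forall e : G, right_identity mul e -> two_sided_identity mul e) /\
  (* (2) *)
  ((forall e : G, ~ right_identity mul e) ->
     ((exists (M : Type) (mulM : M -> M -> M) (eM : M) (dM : M -> M -> R)
              (iota : G -> M),
          is_monoid mulM eM /\ is_metric dM /\ left_invariant mulM dM /\
          (forall a b, iota (mul a b) = mulM (iota a) (iota b)) /\
          (forall a b, iota a = iota b -> a = b) /\
          (forall a b, dM (iota a) (iota b) = d a b) /\
          (forall m : M, (exists g : G, iota g = m) <-> m <> eM))
      <-> strongly_left_invariant mul d) /\
     (strongly_left_invariant mul d -> forall e : G, ~ idempotent mul e)).
Proof.
  destruct Hmet as [Hnn [Hz [Hsym Htri]]].
  assert (Hdd : forall x, d x x = 0) by (intro; apply Hz; reflexivity).
  assert (P1 : forall e : G, idempotent mul e -> left_identity mul e).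
  { intros e He g. apply Hz. rewrite <- (Hli (mul e g) g e).
    rewrite Hsg, He. apply Hdd. }
  assert (P3 : (forall e : G, ~ right_identity mul e) ->
               strongly_left_invariant mul d -> forall e : G, ~ idempotent mul e).
  { intros Hno [_ Hs] e He. apply (Hno e). intro g.
    symmetry. apply Hz. rewrite Hs. rewrite He. apply Hdd. }
  split; [exact P1|]. split.
  { intros e He. split; [|exact He]. apply P1. apply He. }
  intros Hno. split; [|exact (P3 Hno)]. split.
  - intros (M & mulM & eM & dM & iota & [Msg [Ml Mr]] & [Mnn [Mz [Msym Mtri]]] & MLi
            & Hhom & Hinj & Hiso & Him).
    split; [exact Hli|]. intros a b.
    rewrite <- !Hiso, !Hhom.
    pose proof (MLi eM (iota b) (iota a)) as H1.
    pose proof (MLi eM (iota b) (iota b)) as H2.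
    rewrite !Mr in H1, H2. rewrite H1, H2. reflexivity.
  - intros Hs. pose proof (P3 Hno Hs) as Hnoid. destruct Hs as [_ Hs].
    set (mulM := fun x y : option G => match x, y with
                  | Some a, Some b => Some (mul a b)
                  | None, y => y
                  | x, None => x end).
    set (f := fun b => d b (mul b b)).
    set (dM := fun x y : option G => match x, y with
                  | Some a, Some b => d a b
                  | None, Some b => f b
                  | Some b, None => f b
                  | None, None => 0 end).
    assert (Hf : forall a b, f b = d a (mul a b)) by (intros; unfold f; symmetry; apply Hs).
    exists (option G), mulM, None, dM, Some.
    split; [|split; [|split; [|split; [|split; [|split]]]]].
    + split; [|split].
      * intros [a|] [b|] [c|]; simpl; try reflexivity. rewrite Hsg; reflexivity.
      * intros [x|]; reflexivity.
      * intros [x|]; reflexivity.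
    + split; [|split; [|split]].
      * intros [a|] [b|]; simpl; try lra; try apply Hnn; unfold f; apply Hnn.
      * intros [a|] [b|]; simpl; split; intro H.
        -- f_equal; apply Hz; exact H.
        -- inversion H; subst; apply Hdd.
        -- exfalso. apply (Hnoid a). apply Hz. rewrite Hsym. exact H.
        -- discriminate.
        -- exfalso. apply (Hnoid b). apply Hz. rewrite Hsym. exact H.
        -- discriminate.
        -- reflexivity.
        -- reflexivity.
      * intros [a|] [b|]; simpl; try reflexivity. apply Hsym.
      * assert (L1 : forall a b, f b <= f a + d a b).
        { intros a b. rewrite (Hf a a), (Hf a b). pose proof (Htri a (mul a a) (mul a b)).
          rewrite Hli in H. lra. }
        assert (L2 : forall a b, d a b <= f a + f b).
        { intros a b. rewrite (Hf a a), (Hf a b). rewrite <- (Hli a b a).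
          pose proof (Htri (mul a a) a (mul a b)). rewrite (Hsym (mul a a) a) in H. lra. }
        assert (L0 : forall a, 0 <= f a) by (intro; apply Hnn).
        intros [a|] [b|] [c|]; simpl.
        -- apply Htri.
        -- pose proof (L1 b a). rewrite (Hsym b a) in H. lra.
        -- apply L2.
        -- lra.
        -- apply L1.
        -- pose proof (L0 b); lra.
        -- lra.
        -- lra.
    + intros x y [c|]; [|reflexivity].
      destruct x as [a|], y as [b|]; simpl.
      * apply Hli.
      * rewrite (Hf c a). apply Hsym.
      * rewrite (Hf c b). reflexivity.
      * apply Hdd.
    + reflexivity.
    + intros a b H; inversion H; reflexivity.
    + reflexivity.
    + intros [m|]; split.
      * discriminate.
      * intros _. exists m; reflexivity.
      * intros [g H]; discriminate.
      * intros H; exfalso; apply H; reflexivity.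
Qed.
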